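(* Let $P$ be a $d$-polytope with symbolic slack matrix $S_P(\mathbf x)$, slack ideal $I_P\subset\mathbb{C}[\mathbf x]$ and non-incidence toric ideal $T_P\subset\mathbb{C}[\mathbf x]$ (all defined in the context). Then $P$ is morally $2$-level if and only if $I_P\subseteq T_P$.
   Context: Let $P\subset\mathbb{R}^d$ be a $d$-dimensional polytope with labelled vertices $\mathbf p_1,\dots,\mathbf p_v$ and labelled facets $F_1,\dots,F_f$. The support (zero pattern) of a slack matrix of $P$ is the $v\times f$ pattern whose $(i,j)$ entry is zero iff $\mathbf p_i\in F_j$. The symbolic slack matrix $S_P(\mathbf x)$ is the $v\times f$ matrix with a $0$ in entry $(i,j)$ if $\mathbf p_i\in F_j$ and a distinct variable $x_{ij}$ otherwise; let $x_1,\dots,x_t$ denote all these variables and $\mathbb{C}[\mathbf x]=\mathbb{C}[x_1,\dots,x_t]$. The slack ideal is $I_P=\langle (d+2)\text{-minors of } S_P(\mathbf x)\rangle : (x_1\cdots x_t)^\infty$, and the slack variety is $\mathcal V(I_P)\subseteq\mathbb{C}^t$; a point $\mathbf s\in\mathbb{C}^t$ is identified with the matrix $S_P(\mathbf s)$. $S_P(\mathbbm{1})$ denotes the $0/1$ matrix obtained by setting every variable to $1$. $P$ is called morally $2$-level if $S_P(\mathbbm 1)\in\mathcal V(I_P)$. The non-incidence graph $G_P$ is the bipartite graph on the vertices and facets of $P$ with an edge $\{\mathbf p_i,F_j\}$ iff $\mathbf p_i\notin F_j$; its edges are thus labelled by the variables $x_{ij}$. $T_P$ is the toric ideal of the vertex-edge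 incidence matrix of $G_P$, i.e. the kernel of the $\mathbb{C}$-algebra map $\mathbb{C}[\mathbf x]\to\mathbb{C}[s_1^{\pm1},\dots,s_v^{\pm1},u_1^{\pm1},\dots,u_f^{\pm1}]$, $x_{ij}\mapsto s_iu_j$. *)

(* Defs.v *)
From HB Require Import structures.
From mathcomp Require Import all_boot all_order all_algebra.
From mathcomp Require Import reals.
From mathcomp Require Import complex.
From mathcomp Require Import mpoly.

Set Implicit Arguments.
Unset Strict Implicit.
Unset Printing Implicit Defensive.

Import Order.TTheory GRing.Theory Num.Theory.
Local Open Scope ring_scope.

(* Polytopes: P = conv(pts 0, ..., pts (v-1)) in R^d, with labelled      *)
(* vertices pts and labelled facets, facet j being {x | <x, a j> = b j}  *)
(* intersected with P, where <x, a j> <= b j is valid on P.              *)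
Section Polytope.
Variables (R : realType) (d v f : nat).

Definition dotr (x y : 'rV[R]_d) : R := \sum_(k < d) x 0 k * y 0 k.

(* pts i is a vertex of conv(pts): it is not a convex combination of the
   other points (this also forces the points to be pairwise distinct). *)
Definition is_vertex (pts : 'I_v -> 'rV[R]_d) (i : 'I_v) : Prop :=
  ~ exists lam : 'I_v -> R,
      [/\ forall k, 0 <= lam k, lam i = 0, \sum_(k < v) lam k = 1 &
          pts i = \sum_(k < v) lam k *: pts k].

Definition pt_aug (p : 'rV[R]_d) : 'rV[R]_(d + 1) := row_mx p (const_mx 1).

(* 1 + (dimension of the affine hull of {pts i | i in S}) *)
Definition aff_rank (pts : 'I_v -> 'rV[R]_d) (S : {set 'I_v}) : nat :=
  \rank (\matrix_(i < v) (if i \in S then pt_aug (pts i) else 0)).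

Definition tight (pts : 'I_v -> 'rV[R]_d) (a0 : 'rV[R]_d) (b0 : R) : {set 'I_v} :=
  [set i | dotr (pts i) a0 == b0].

Definition facet_ineq (pts : 'I_v -> 'rV[R]_d) (a0 : 'rV[R]_d) (b0 : R) : Prop :=
  [/\ a0 != 0, forall i, dotr (pts i) a0 <= b0 &
      aff_rank pts (tight pts a0 b0) = d].

Definition is_polytope_labelling (pts : 'I_v -> 'rV[R]_d)
    (a : 'I_f -> 'rV[R]_d) (b : 'I_f -> R) : Prop :=
  [/\ forall i, is_vertex pts i,
      aff_rank pts setT = d + 1,
      forall j, facet_ineq pts (a j) (b j),
      forall j j', tight pts (a j) (b j) = tight pts (a j') (b j') -> j = j' &
      forall a0 b0, facet_ineq pts a0 b0 ->
        exists j, tight pts a0 b0 = tight pts (a j) (b j)].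

Definition incid (pts : 'I_v -> 'rV[R]_d) (a : 'I_f -> 'rV[R]_d) (b : 'I_f -> R)
    (i : 'I_v) (j : 'I_f) : bool :=
  i \in tight pts (a j) (b j).

End Polytope.

Section Ideals.
Variable (A : comNzRingType).

Definition ideal_gen (G : A -> Prop) : A -> Prop :=
  fun p => exists s : seq (A * A),
    (forall g, g \in s -> G g.2) /\ p = \sum_(g <- s) g.1 * g.2.

Definition saturation (I : A -> Prop) (g : A) : A -> Prop :=
  fun p => exists e : nat, I (g ^+ e * p).

Definition minors (k m n : nat) (M : 'M[A]_(m, n)) : A -> Prop :=
  fun q => exists (r : 'I_k -> 'I_m) (c : 'I_k -> 'I_n),
    [/\ injective r, injective c & q = \det (\matrix_(x < k, y < k) M (r x) (c y))].

End Ideals.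

Section Slack.
Variables (K : fieldType) (v f : nat) (inc : 'I_v -> 'I_f -> bool).

(* the non-incident pairs (i,j), i.e. the edges of G_P, i.e. the variables *)
Definition noninc : {set 'I_v * 'I_f} := [set ij | ~~ inc ij.1 ij.2].

(* number t of variables; variable k : 'I_t is x_(enum_val k) *)
Definition nvars : nat := #|noninc|.

Definition var_pair (k : 'I_nvars) : 'I_v * 'I_f := enum_val k.

Definition sym_slack : 'M[{mpoly K[nvars]}]_(v, f) :=
  \matrix_(i < v, j < f) \sum_(k < nvars | var_pair k == (i, j)) 'X_k.

Definition slack_ideal (d : nat) : {mpoly K[nvars]} -> Prop :=
  saturation (ideal_gen (minors (d + 2) sym_slack)) (\prod_(k < nvars) 'X_k).

Definition morally_2level (d : nat) : Prop :=
  forall p, slack_ideal d p -> p.@[fun _ => 1] = 0.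

(* toric ideal T_P: kernel of x_ij |-> s_i u_j, where s_i = X_(lshift f i),
   u_j = X_(rshift v j) in K[s_1..s_v,u_1..u_f] (a subring of the Laurent
   polynomial ring, so the kernel is the same). *)
Definition toric_ideal : {mpoly K[nvars]} -> Prop :=
  fun p => mmap (@mpolyC (v + f) K)
    (fun k : 'I_nvars =>
       ('X_(lshift f (var_pair k).1) * 'X_(rshift v (var_pair k).2))
         : {mpoly K[v + f]}) p = 0.

End Slack.

Arguments sym_slack K {v f} inc.
Arguments slack_ideal K {v f} inc d _.
Arguments morally_2level K {v f} inc d.
Arguments toric_ideal K {v f} inc _.

(* Main.v *)
Require Import Defs.
From HB Require Import structures.
From mathcomp Require Import all_boot all_order all_algebra.
From mathcomp Require Import reals complex mpoly.
Import GRing.Theory Num.Theory.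
Local Open Scope ring_scope.

Lemma enc_inj (N n : nat) (g h : 'I_n -> nat) :
  (forall i, g i < N)%N -> (forall i, h i < N)%N ->
  (\sum_(i < n) g i * N ^ i = \sum_(i < n) h i * N ^ i)%N -> g =1 h.
Proof.
elim: n g h => [|n IH] g h Hg Hh E; first by case.
move: E; rewrite !big_ord_recl /= !expn0 !muln1.
have E2 (k : 'I_n.+1 -> nat) : (\sum_(i < n) k (lift ord0 i) * N ^ bump 0 i =
    N * \sum_(i < n) k (lift ord0 i) * N ^ i)%N.
  rewrite big_distrr /=; apply: eq_bigr => i _.
  by rewrite /bump /= add1n expnS mulnCA.
rewrite !E2 => E.
have NP : (0 < N)%N by apply: leq_ltn_trans (Hg ord0).
have H0 : g ord0 = h ord0.
  have := congr1 (modn^~ N) E; rewrite /= !(addnC (g _)) !(addnC (h _)).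
  by rewrite !(mulnC N) !modnMDl !modn_small.
rewrite H0 in E; move/addnI: E => /eqP; rewrite eqn_pmul2l // => /eqP E.
have IHE := IH (fun i => g (lift ord0 i)) (fun i => h (lift ord0 i))
  (fun i => Hg _) (fun i => Hh _) E.
move=> i; case: (unliftP ord0 i) => [j ->|->] //.
Qed.

Lemma mnm_le_mdeg n (m : 'X_{1..n}) i : (m i <= mdeg m)%N.
Proof. by rewrite mdegE (bigD1 i) //= leq_addr. Qed.

Lemma mpoly_torus0 (K : numFieldType) n (q : {mpoly K[n]}) :
  (forall z : 'I_n -> K, (forall i, z i != 0) -> q.@[z] = 0) -> q = 0.
Proof.
move=> Hq.
set N := msize q.
pose enc (m : 'X_{1..n}) := (\sum_(i < n) m i * N ^ i)%N.
pose P : {poly K} := \sum_(m <- msupp q) q@_m *: 'X^(enc m).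
have PE t : P.[t] = q.@[fun i => t ^+ (N ^ i)].
  rewrite mevalE horner_sum; apply: eq_bigr => m _; rewrite hornerZ hornerXn.
  congr (_ * _); rewrite /enc -prodrXr; apply: eq_bigr => i _.
  by rewrite -exprM mulnC.
have P0 : P = 0.
  apply/eqP/negPn/negP => nz.
  pose rs : seq K := [seq i.+1%:R | i <- iota 0 (size P)].
  have Hr : all (root P) rs.
    apply/allP => x /mapP [i _ ->]; rewrite /root PE Hq // => j.
    by rewrite expf_neq0 // pnatr_eq0.
  have Hu : uniq rs.
    rewrite map_inj_uniq ?iota_uniq // => i j /eqP; rewrite eqr_nat.
    by move/eqP => [].
  have := max_poly_roots nz Hr Hu.
  by rewrite size_map size_iota ltnn.
apply/mpolyP => m0; rewrite mcoeff0.
case: (boolP (m0 \in msupp q)) => [Hm|Hm]; last by rewrite memN_msupp_eq0.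
have E1 : q@_m0 = \sum_(m <- msupp q) q@_m * (m == m0)%:R.
  rewrite [in LHS](mpolyE q).
  rewrite (big_morph (mcoeff m0) (@mcoeffD n K m0) (@mcoeff0 n K m0)).
  by apply: eq_bigr => m _; rewrite mcoeffZ mcoeffX.
have := congr1 (fun p : {poly K} => p`_(enc m0)) P0; rewrite coef0 coef_sum /=.
rewrite E1 => H; apply: (etrans _ H); rewrite !big_seq; apply: eq_bigr => m Hm'.
rewrite coefZ coefXn; congr (_ * _%:R).
have B (m1 : 'X_{1..n}) : m1 \in msupp q -> forall i, (m1 i < N)%N.
  by move=> H1 i; exact: (leq_ltn_trans (@mnm_le_mdeg _ m1 i) (msize_mdeg_lt H1)).
congr (nat_of_bool _); apply/eqP/eqP => [->|E] //.
apply/mnmP => i; symmetry.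
have := @enc_inj N n m0 m (B _ Hm) (B _ Hm') E i. by [].
Qed.
Lemma meval_mmap (K : comNzRingType) t k (h : 'I_t -> {mpoly K[k]})
    (w : 'I_k -> K) (p : {mpoly K[t]}) :
  (mmap (@mpolyC k K) h p).@[w] = p.@[fun i => (h i).@[w]].
Proof.
have -> : mmap (@mpolyC k K) h p = p \mPo [tuple h i | i < t].
  rewrite /comp_mpoly /mmap; apply: eq_bigr => m _; congr (_ * _).
  by apply: mmap1_eq => i; rewrite tnth_mktuple.
rewrite comp_mpoly_meval; apply: meval_eq => i; by rewrite tnth_mktuple.
Qed.

Section IdealGen.
Variables (A : comNzRingType) (G : A -> Prop).

Lemma ideal_gen0 : ideal_gen G 0.
Proof. by exists [::]; rewrite big_nil. Qed.

Lemma ideal_genD p q : ideal_gen G p -> ideal_gen G q -> ideal_gen G (p + q).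
Proof.
move=> [s [Hs ->]] [s' [Hs' ->]]; exists (s ++ s'); split; last by rewrite big_cat.
by move=> g; rewrite mem_cat => /orP[/Hs|/Hs'].
Qed.

Lemma ideal_genM r p : ideal_gen G p -> ideal_gen G (r * p).
Proof.
move=> [s [Hs ->]]; exists [seq (r * g.1, g.2) | g <- s]; split.
  by move=> g /mapP [g' /Hs H ->].
by rewrite big_map big_distrr /=; apply: eq_bigr => g _; rewrite mulrA.
Qed.

Lemma ideal_genG r g : G g -> ideal_gen G (r * g).
Proof.
move=> Hg; exists [:: (r, g)]; split; last by rewrite big_seq1.
by move=> g'; rewrite inE => /eqP ->.
Qed.

End IdealGen.

Section Scaling.
Variables (K : fieldType) (v f : nat) (inc : 'I_v -> 'I_f -> bool) (d : nat).
Variables (lam : 'I_v -> K) (mu : 'I_f -> K).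
Hypotheses (lam0 : forall i, lam i != 0) (mu0 : forall j, mu j != 0).

Local Notation t := (nvars inc).
Local Notation S := (sym_slack K inc).
Definition cc (k : 'I_t) : K := lam (var_pair k).1 * mu (var_pair k).2.
Definition lq : t.-tuple {mpoly K[t]} := [tuple cc k *: 'X_k | k < t].
Local Notation phi := (comp_mpoly lq).

Lemma cc_neq0 k : cc k != 0.
Proof. by rewrite mulf_neq0. Qed.

Lemma phiX k : phi 'X_k = cc k *: 'X_k.
Proof. by rewrite /comp_mpoly mmapX mmap1U tnth_mktuple. Qed.

Lemma phiS i j : phi (S i j) = (lam i * mu j) *: S i j.
Proof.
rewrite /sym_slack !mxE rmorph_sum scaler_sumr; apply: eq_bigr => k /eqP hk.
by apply: (etrans (phiX k)); rewrite /cc hk.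
Qed.

Lemma phi_minor g : minors (d + 2) S g -> exists c : K, c != 0 /\ phi g = c *: g.
Proof.
move=> [r [c [_ _ ->]]].
set M := \matrix_(x < d + 2, y < d + 2) S (r x) (c y).
pose D1 : 'rV[{mpoly K[t]}]_(d + 2) := \row_x (lam (r x))%:MP.
pose D2 : 'rV[{mpoly K[t]}]_(d + 2) := \row_y (mu (c y))%:MP.
exists ((\prod_x lam (r x)) * (\prod_y mu (c y))); split.
  by rewrite mulf_neq0 //; apply/prodf_neq0 => x _.
have E : map_mx phi M = diag_mx D1 *m M *m diag_mx D2.
  apply/matrixP => x y; have PS := phiS (r x) (c y); rewrite /sym_slack mxE in PS.
  rewrite mul_mx_diag mul_diag_mx !mxE PS -mul_mpolyC rmorphM /=.
  by rewrite -!mulrA; congr (_ * _); rewrite mulrC.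
rewrite -det_map_mx E !det_mulmx !det_diag.
rewrite -!mul_mpolyC rmorphM /= !rmorph_prod.
have -> : \prod_i D1 0 i = \prod_x (lam (r x))%:MP by apply: eq_bigr => x _; rewrite mxE.
have -> : \prod_i D2 0 i = \prod_y (mu (c y))%:MP by apply: eq_bigr => x _; rewrite mxE.
by rewrite mulrC !mulrA [_ * \prod_y _]mulrC.
Qed.

Lemma phi_ideal p : ideal_gen (minors (d + 2) S) p ->
  ideal_gen (minors (d + 2) S) (phi p).
Proof.
move=> [s [Hs ->]]; elim: s Hs => [|g s IH] Hs.
  by rewrite big_nil rmorph0; apply: ideal_gen0.
rewrite big_cons rmorphD rmorphM /=; apply: ideal_genD; last first.
  by apply: IH => g' Hg'; apply: Hs; rewrite inE Hg' orbT.
have [cg [_ ->]] := @phi_minor _ (Hs g (mem_head _ _)).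
rewrite -mul_mpolyC mulrA; apply: ideal_genG; exact: Hs (mem_head _ _).
Qed.

Lemma phi_slack p : slack_ideal K inc d p -> slack_ideal K inc d (phi p).
Proof.
move=> [e He]; exists e.
set g := \prod_(k < t) 'X_k.
have Pg : phi g = (\prod_k cc k) *: g.
  by rewrite rmorph_prod -scaler_prod; apply: eq_bigr => k _; exact: phiX.
have := @phi_ideal _ He; rewrite rmorphM rmorphXn /= Pg exprZn -scalerAl.
set C := (\prod_k cc k) ^+ e => HC.
have CN : C != 0 by rewrite expf_neq0 //; apply/prodf_neq0 => k _; apply: cc_neq0.
have := @ideal_genM _ _ (C^-1)%:MP _ HC; rewrite mul_mpolyC scalerA mulVf // scale1r.
by [].
Qed.

Lemma scaled_eval p : morally_2level K inc d -> slack_ideal K inc d p ->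
  p.@[cc] = 0.
Proof.
move=> M Hp; have := M _ (@phi_slack _ Hp).
rewrite comp_mpoly_meval => <-; apply: meval_eq => k.
by rewrite tnth_mktuple mevalZ mevalXU mulr1.
Qed.

End Scaling.

Theorem theorem3p6 (R : realType) (d v f : nat) (pts : 'I_v -> 'rV[R]_d)
    (a : 'I_f -> 'rV[R]_d) (b : 'I_f -> R) :
  is_polytope_labelling pts a b ->
  (morally_2level (complex R) (incid pts a b) d <->
   (forall p, slack_ideal (complex R) (incid pts a b) d p ->
              toric_ideal (complex R) (incid pts a b) p)).
Proof.
move=> _; split.
- move=> M p Hp; rewrite /toric_ideal; apply: mpoly_torus0 => z Hz.
  rewrite meval_mmap.
  have := @scaled_eval _ _ _ (incid pts a b) d (fun i => z (lshift f i))
    (fun j => z (rshift v j)) (fun i => Hz _) (fun j => Hz _) p M Hp.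
  move=> <-; apply: meval_eq => k.
  by rewrite /cc mevalM !mevalXU.
- move=> H p Hp; have := H p Hp; rewrite /toric_ideal => E.
  have := congr1 (meval (fun _ : 'I_(v + f) => (1 : complex R))) E.
  rewrite meval_mmap meval0 => <-; apply: meval_eq => k.
  by rewrite mevalM !mevalXU mulr1.
Qed.
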